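(* Let $H$ be a graph and $(T,(V_t)_{t\in T})$ a rooted tree-decomposition of $H$ of finite adhesion. Suppose there is an edge $e=ts$ of $T$ with $t<_T s$ and a set $Y\subseteq V_e$ such that $(H\uparrow e)-Y$ has at least two components $C_1,C_2$ with $V(C_1)\cap V_e\neq\emptyset\neq V(C_2)\cap V_e$ and $V(C_2)\cap(V_s\setminus V_e)\neq\emptyset$. Then $(T,(V_t)_{t\in T})$ is not lean.
   Context: A tree-decomposition $(T,(V_t)_{t\in T})$ of $H$ consists of a tree $T$ and bags $V_t\subseteq V(H)$ covering all vertices and edges of $H$ such that for each vertex $v$ the nodes $t$ with $v\in V_t$ form a subtree. For an edge $e=st$ of $T$, $V_e:=V_s\cap V_t$ is its adhesion set; the decomposition has finite adhesion if all $V_e$ are finite. In a rooted tree-decomposition, $T$ has a root $r$ and $\le_T$ is the tree-order ($s\le_T t$ iff $s$ lies on the $r$–$t$ path in $T$). For an edge $e$ of $T$, $T_e$ is the component of $T-e$ not containing $r$, and $H\uparrow e$ is the subgraph of $H$ induced on $\bigcup_{u\in T_e}V_u$. The tree-decomposition is lean if for every two (not necessarily distinct) nodes $s,t$ and all $Z_s\subseteq V_s$, $Z_t\subseteq V_t$ with $|Z_s|=|Z_t|=:\ell\in\mathbb N$, either $H$ contains $\ell$ pairwise disjoint $Z_s$–$Z_t$ paths or some edge $e$ of the $s$–$t$ path in $T$ has $|V_e|<\ell$. *)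

(* Defs.v *)
From Stdlib Require Import List Arith.
Import ListNotations.

Record graph := Graph {
  vx : Type;
  adj : vx -> vx -> Prop;
  adj_sym : forall x y, adj x y -> adj y x;
  adj_irr : forall x, ~ adj x x }.

Fixpoint chain {G : graph} (p : list (vx G)) : Prop :=
  match p with
  | x :: ((y :: _) as q) => adj G x y /\ chain q
  | _ => True
  end.

Definition is_path (G : graph) (p : list (vx G)) : Prop :=
  p <> [] /\ NoDup p /\ chain p.

Definition path_from_to (G : graph) (a b : vx G) (p : list (vx G)) : Prop :=
  is_path G p /\ hd_error p = Some a /\ last p a = b.

Definition is_cycle (G : graph) (p : list (vx G)) : Prop :=
  3 <= length p /\ NoDup p /\ chain p /\
  exists a b, hd_error p = Some a /\ last p a = b /\ adj G b a.

Definition connected_graph (G : graph) : Prop :=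
  forall x y : vx G, exists p, path_from_to G x y p.

Definition connected_set (G : graph) (X : vx G -> Prop) : Prop :=
  forall x y, X x -> X y ->
    exists p, path_from_to G x y p /\ forall z, In z p -> X z.

Definition is_tree (T : graph) : Prop :=
  connected_graph T /\ forall p, ~ is_cycle T p.

Definition tree_decomposition (H T : graph) (bag : vx T -> vx H -> Prop) : Prop :=
  is_tree T /\
  (forall v, exists t, bag t v) /\
  (forall u v, adj H u v -> exists t, bag t u /\ bag t v) /\
  (forall v, connected_set T (fun t => bag t v)).

Definition adhesion {H T : graph} (bag : vx T -> vx H -> Prop) (t s : vx T)
  : vx H -> Prop := fun v => bag t v /\ bag s v.

Definition finite_set {A : Type} (X : A -> Prop) : Prop :=
  exists l : list A, forall x, X x -> In x l.

Definition finite_adhesion {H T : graph} (bag : vx T -> vx H -> Prop) : Prop :=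
  forall t s, adj T t s -> finite_set (adhesion bag t s).

Definition card_lt {A : Type} (X : A -> Prop) (l : nat) : Prop :=
  forall xs : list A, NoDup xs -> (forall x, In x xs -> X x) -> length xs < l.

Definition tree_le (T : graph) (r s t : vx T) : Prop :=
  exists p, path_from_to T r t p /\ In s p.
Definition tree_lt (T : graph) (r s t : vx T) : Prop :=
  tree_le T r s t /\ s <> t.

Definition avoids_edge {G : graph} (a b : vx G) (p : list (vx G)) : Prop :=
  forall p1 p2 x y, p = p1 ++ x :: y :: p2 ->
    ~ ((x = a /\ y = b) \/ (x = b /\ y = a)).

Definition conn_minus_edge (T : graph) (a b x y : vx T) : Prop :=
  exists p, path_from_to T x y p /\ avoids_edge a b p.

(* T_e : the component of T - e not containing the root r, e = ts *)
Definition T_up (T : graph) (r t s : vx T) (u : vx T) : Prop :=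
  (conn_minus_edge T t s u t \/ conn_minus_edge T t s u s) /\
  ~ conn_minus_edge T t s u r.

(* vertex set of H↑e = union of the bags of nodes of T_e *)
Definition H_up {H T : graph} (bag : vx T -> vx H -> Prop) (r t s : vx T)
  : vx H -> Prop := fun v => exists u, T_up T r t s u /\ bag u v.

(* C is (the vertex set of) a component of the subgraph H[X] induced on X *)
Definition is_component (H : graph) (X C : vx H -> Prop) : Prop :=
  (exists v, C v) /\ (forall v, C v -> X v) /\ connected_set H C /\
  (forall u v, C u -> X v -> adj H u v -> C v).

Definition AB_path (H : graph) (A B : vx H -> Prop) (p : list (vx H)) : Prop :=
  is_path H p /\
  exists a b, hd_error p = Some a /\ last p a = b /\ A a /\ B b /\
    (forall x, In x p -> A x -> x = a) /\ (forall x, In x p -> B x -> x = b).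

Definition disjoint_AB_paths (H : graph) (A B : vx H -> Prop) (l : nat) : Prop :=
  exists P : list (list (vx H)), length P = l /\
    (forall p, In p P -> AB_path H A B p) /\
    (forall i j, i < l -> j < l -> i <> j ->
       forall x, In x (nth i P []) -> ~ In x (nth j P [])).

Definition lean (H T : graph) (bag : vx T -> vx H -> Prop) : Prop :=
  forall (s t : vx T) (Zs Zt : list (vx H)),
    NoDup Zs -> NoDup Zt ->
    (forall z, In z Zs -> bag s z) -> (forall z, In z Zt -> bag t z) ->
    length Zs = length Zt ->
    disjoint_AB_paths H (fun z => In z Zs) (fun z => In z Zt) (length Zs) \/
    exists p, path_from_to T s t p /\
      exists p1 p2 a b, p = p1 ++ a :: b :: p2 /\
        card_lt (adhesion bag a b) (length Zs).

(* Main.v *)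
Require Import Defs.
From Stdlib Require Import List Arith Lia Classical.
Import ListNotations.

Lemma last_indep {A} (l : list A) d d' : l <> [] -> last l d = last l d'.
Proof.
  induction l as [|a l IH]; intros Hn; [congruence|].
  destruct l as [|b l]; [reflexivity|].
  simpl. apply IH. discriminate.
Qed.

Lemma last_app_cons {A} (l1 l2 : list A) x d : last (l1 ++ x :: l2) d = last (x :: l2) d.
Proof.
  induction l1 as [|a l1 IH]; [reflexivity|].
  simpl. rewrite IH. destruct l1; simpl; [destruct l2; reflexivity|].
  destruct (l1 ++ x :: l2) eqn:E; [destruct l1; discriminate|reflexivity].
Qed.

Lemma last_In' {A} (l : list A) d : l <> [] -> In (last l d) l.
Proof.
  induction l as [|a l IH]; intros Hn; [congruence|].
  destruct l as [|b l]; [left; reflexivity|].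
  right. apply IH. discriminate.
Qed.

Lemma chain_tail {G : graph} (a : vx G) l : chain (a :: l) -> chain l.
Proof. destruct l; simpl; tauto. Qed.

Lemma chain_app_r {G : graph} (l1 l2 : list (vx G)) : chain (l1 ++ l2) -> chain l2.
Proof.
  induction l1 as [|a l1 IH]; simpl; [auto|].
  intros H. apply IH. exact (chain_tail a _ H).
Qed.

Lemma avoids_single {G : graph} (a b x : vx G) : avoids_edge a b [x].
Proof.
  intros p1 p2 x0 y0 E. destruct p1 as [|c [|d p1]]; simpl in E; inversion E.
Qed.

Lemma avoids_tail {G : graph} (a b x : vx G) l : avoids_edge a b (x :: l) -> avoids_edge a b l.
Proof.
  intros H p1 p2 x0 y0 E. apply (H (x :: p1) p2). rewrite E. reflexivity.
Qed.

Lemma avoids_app_r {G : graph} (a b : vx G) l1 l2 : avoids_edge a b (l1 ++ l2) -> avoids_edge a b l2.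
Proof.
  induction l1; simpl; auto. intros H. apply IHl1. eapply avoids_tail; eauto.
Qed.

Inductive rw (T : graph) (a b : vx T) : vx T -> vx T -> Prop :=
| rw_refl x : rw T a b x x
| rw_step x y z : adj T x y -> ~ ((x = a /\ y = b) \/ (x = b /\ y = a)) -> rw T a b y z -> rw T a b x z.

Lemma rw_trans T a b x y z : rw T a b x y -> rw T a b y z -> rw T a b x z.
Proof. induction 1; intros; auto. eapply rw_step; eauto. Qed.

Lemma rw_sym T a b x y : rw T a b x y -> rw T a b y x.
Proof.
  induction 1. constructor.
  eapply rw_trans; [exact IHrw|]. eapply rw_step; [apply adj_sym; eauto| |constructor].
  intros [[-> ->]|[-> ->]]; tauto.
Qed.

Lemma path_rw T a b : forall p x, chain p -> hd_error p = Some x -> avoids_edge a b p ->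
  forall d, rw T a b x (last p d).
Proof.
  induction p as [|x0 p IH]; intros x Hc Hh Ha d; [discriminate|].
  simpl in Hh. inversion Hh; subst x0.
  destruct p as [|y p]; [constructor|].
  destruct Hc as [Hxy Hc].
  change (last (x :: y :: p) d) with (last (y :: p) d).
  eapply rw_step; [exact Hxy| |].
  - intros Hb. exact (Ha [] p x y eq_refl Hb).
  - apply IH; auto. eapply avoids_tail; eauto.
Qed.

Lemma rw_path T a b x y : rw T a b x y -> exists p, path_from_to T x y p /\ avoids_edge a b p.
Proof.
  induction 1 as [x|x y z Hxy Hn Hr IH].
  - exists [x]. split; [|apply avoids_single].
    split; [split; [discriminate| split; [constructor; [simpl; tauto|constructor]|exact I]]|auto].
  - destruct IH as [p [[[Hne [Hnd Hc]] [Hh Hl]] Ha]].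
    destruct (classic (In x p)) as [Hin|Hin].
    + destruct (in_split _ _ Hin) as [p1 [p2 E]]. subst p.
      exists (x :: p2). split; [|eapply avoids_app_r; eauto].
      split; [split; [discriminate|split]|split].
      * eapply NoDup_app_remove_l; eauto.
      * eapply chain_app_r; eauto.
      * reflexivity.
      * rewrite <- Hl. rewrite last_app_cons. apply last_indep. discriminate.
    + destruct p as [|y0 p]; [congruence|]. simpl in Hh. inversion Hh; subst y0.
      exists (x :: y :: p). split.
      * split; [split; [discriminate|split]|split].
        -- constructor; auto.
        -- simpl. split; auto.
        -- reflexivity.
        -- rewrite <- Hl. change (last (x :: y :: p) x) with (last (y :: p) x).
           apply last_indep; discriminate.
      * intros p1 p2 x0 y0 E. destruct p1 as [|c p1].
        -- simpl in E. inversion E; subst. auto.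
        -- simpl in E. inversion E; subst. eapply Ha. eauto.
Qed.

Lemma conn_rw T a b x y : conn_minus_edge T a b x y <-> rw T a b x y.
Proof.
  split.
  - intros [p [[[Hne [Hnd Hc]] [Hh Hl]] Ha]]. rewrite <- Hl. apply path_rw; auto.
  - intros H. destruct (rw_path _ _ _ _ _ H) as [p [Hp Ha]]. exists p; auto.
Qed.

Lemma cross (H T : graph) (bag : vx T -> vx H -> Prop) r t s :
  tree_decomposition H T bag ->
  forall u u' m, T_up T r t s u' -> ~ T_up T r t s m -> bag u' u -> bag m u ->
  bag t u /\ bag s u.
Proof.
  intros [_ [_ [_ Hcon]]] u u' m Hu' Hm Bu' Bm.
  destruct (Hcon u u' m Bu' Bm) as [q [[[Hne [Hnd Hc]] [Hh Hl]] Hin]].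
  apply NNPP. intros Hno.
  assert (Ha : avoids_edge t s q).
  { intros p1 p2 x y E Hxy. apply Hno.
    assert (In x q /\ In y q) as [Ix Iy].
    { rewrite E. split; apply in_or_app; right; simpl; auto. }
    destruct Hxy as [[-> ->]|[-> ->]]; auto. }
  assert (R : rw T t s u' m) by (rewrite <- Hl; apply path_rw; auto).
  apply Hm. unfold T_up in *. destruct Hu' as [Hts Hr].
  rewrite !conn_rw in Hts. rewrite conn_rw in Hr.
  split.
  - rewrite !conn_rw. destruct Hts as [X|X]; [left|right];
      exact (rw_trans _ _ _ _ _ _ (rw_sym _ _ _ _ _ R) X).
  - rewrite conn_rw. intros X. apply Hr. eapply rw_trans; eauto.
Qed.

Lemma chain_closed (G : graph) (P Q : vx G -> Prop) :
  (forall u v, P u -> Q v -> adj G u v -> P v) ->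
  forall p, chain p -> (forall z, In z p -> Q z) ->
  forall h, hd_error p = Some h -> P h -> forall z, In z p -> P z.
Proof.
  intros Hcl p. induction p as [|a p IH]; intros Hc HQ h Hh HP z Hz; [destruct Hz|].
  simpl in Hh; inversion Hh; subst a.
  destruct Hz as [<-|Hz]; auto.
  destruct p as [|b p]; [destruct Hz|].
  destruct Hc as [Hab Hc].
  apply (IH Hc) with (h := b); auto.
  - intros; apply HQ; right; auto.
  - apply (Hcl h); auto. apply HQ; right; left; auto.
Qed.

Lemma comp_sub (H : graph) X C1 C2 :
  is_component H X C1 -> is_component H X C2 ->
  forall u, C1 u -> C2 u -> forall v, C1 v -> C2 v.
Proof.
  intros [_ [S1 [Cn1 _]]] [_ [_ [_ Cl2]]] u H1 H2 v Hv.
  destruct (Cn1 u v H1 Hv) as [p [[[Hne [Hnd Hc]] [Hh Hl]] Hin]].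
  rewrite <- Hl. apply (chain_closed H C2 X Cl2 p Hc) with (h := u); auto.
  apply last_In'; auto.
Qed.

Lemma exit_lemma (G : graph) (P : vx G -> Prop) : forall p, chain p ->
  forall h, hd_error p = Some h -> P h -> forall d, ~ P (last p d) ->
  exists u w, In u p /\ In w p /\ P u /\ ~ P w /\ adj G u w.
Proof.
  induction p as [|a p IH]; intros Hc h Hh HP d Hl; [discriminate|].
  simpl in Hh; inversion Hh; subst a.
  destruct p as [|b p]; [simpl in Hl; tauto|].
  destruct Hc as [Hab Hc].
  destruct (classic (P b)) as [Pb|Pb].
  - destruct (IH Hc b eq_refl Pb d Hl) as [u [w [? [? ?]]]].
    exists u, w. simpl in *. tauto.
  - exists h, b. simpl. tauto.
Qed.

Lemma finite_nodup {A} (P : A -> Prop) (l : list A) :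
  exists l', NoDup l' /\ forall z, In z l' <-> In z l /\ P z.
Proof.
  induction l as [|a l [l' [Hn Hi]]].
  - exists []. split; [constructor|]. simpl; tauto.
  - destruct (classic (P a /\ ~ In a l')) as [[Pa Na]|Hno].
    + exists (a :: l'). split; [constructor; auto|].
      intros z. simpl. rewrite Hi. split; [intros [<-|X]; tauto|].
      intros [[<-|X] Pz]; auto.
    + exists l'. split; auto. intros z. rewrite Hi. simpl. split; [tauto|].
      intros [[<-|X] Pz]; auto. apply NNPP; intros Nz. apply Hno; split; auto.
      intros Iz. apply Nz. apply Hi in Iz. tauto.
Qed.

Lemma hd_In {A} (d : A) p : p <> [] -> In (hd d p) p.
Proof. destruct p; simpl; [congruence|auto]. Qed.

Theorem lemma3p4 (H T : graph) (bag : vx T -> vx H -> Prop) (r : vx T) :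
  tree_decomposition H T bag ->
  finite_adhesion bag ->
  forall (t s : vx T), adj T t s -> tree_lt T r t s ->
  forall (Y : vx H -> Prop), (forall v, Y v -> adhesion bag t s v) ->
  forall (C1 C2 : vx H -> Prop),
    is_component H (fun v => H_up bag r t s v /\ ~ Y v) C1 ->
    is_component H (fun v => H_up bag r t s v /\ ~ Y v) C2 ->
    ~ (forall v, C1 v <-> C2 v) ->
    (exists v, C1 v /\ adhesion bag t s v) ->
    (exists v, C2 v /\ adhesion bag t s v) ->
    (exists v, C2 v /\ bag s v /\ ~ adhesion bag t s v) ->
    ~ lean H T bag.
Proof.
  intros Htd Hfin t s Hts Hlt Y HY C1 C2 Hc1 Hc2 Hneq [v1 [C1v1 Ev1]] _
    [x [C2x [Bx NEx]]] Hlean.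
  set (W := fun z => adhesion bag t s z /\ ~ C1 z).
  destruct (Hfin t s Hts) as [l Hl].
  destruct (finite_nodup W l) as [Wl [HWn HWi]].
  assert (HW : forall z, In z Wl <-> W z).
  { intros z. rewrite HWi. split; [tauto|]. intros Hz; split; auto. apply Hl, Hz. }
  assert (D12 : forall z, C1 z -> C2 z -> False).
  { intros z A B. apply Hneq. intros v; split.
    - apply (comp_sub _ _ _ _ Hc1 Hc2 z A B).
    - apply (comp_sub _ _ _ _ Hc2 Hc1 z B A). }
  assert (key : forall p h, chain p -> hd_error p = Some h -> C2 h ->
            forall d, ~ C2 (last p d) -> exists z, In z p /\ W z).
  { intros p h Hc Hh Ch d Nl.
    destruct (exit_lemma H C2 p Hc h Hh Ch d Nl) as [u [w [Iu [Iw [Cu [Nw Auw]]]]]].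
    destruct Hc2 as [_ [S2 [_ Cl2]]].
    destruct (classic (H_up bag r t s w /\ ~ Y w)) as [Xw|Xw].
    { exfalso. apply Nw. exact (Cl2 u w Cu Xw Auw). }
    destruct (classic (Y w)) as [Yw|Yw].
    { exists w. split; auto. split; auto. intros C1w.
      destruct Hc1 as [_ [S1 _]]. apply (S1 w C1w). auto. }
    assert (Hw : ~ H_up bag r t s w) by tauto.
    destruct (S2 u Cu) as [[u' [Tu' Bu']] _].
    destruct Htd as [Htr [Hcov [Hedge Hcon]]].
    destruct (Hedge u w Auw) as [m [Bmu Bmw]].
    assert (Tm : ~ T_up T r t s m).
    { intros Tm. apply Hw. exists m. auto. }
    destruct (cross H T bag r t s (conj Htr (conj Hcov (conj Hedge Hcon))) u u' m Tu' Tm Bu' Bmu)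
      as [B1 B2].
    exists u. split; auto. split; [split; auto|]. intros C1u. exact (D12 u C1u Cu). }
  assert (NWx : ~ W x) by (intros [A _]; auto).
  assert (NWv1 : ~ W v1) by (intros [_ A]; auto).
  destruct (Hlean s s (x :: Wl) (v1 :: Wl)) as [HP|HT].
  - constructor; auto. rewrite HW; auto.
  - constructor; auto. rewrite HW; auto.
  - intros z [<-|Hz]; auto. apply HW in Hz. apply Hz.
  - intros z [<-|Hz]; [apply Ev1|]. apply HW in Hz. apply Hz.
  - reflexivity.
  - destruct HP as [P [HlP [HPab Hd]]].
    assert (Hheads : forall p, In p P -> In (hd x p) Wl).
    { intros p Ip. destruct (HPab p Ip) as [[Hne [Hnd Hc]] [a [b [Hh [Hlst [Aa [Bb [HA HB]]]]]]]].
      assert (ha : hd x p = a) by (destruct p; simpl in *; [congruence|inversion Hh; auto]).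
      rewrite ha. destruct Aa as [<-|Aa]; auto. exfalso.
      destruct Bb as [<-|Bb].
      + assert (Nl : ~ C2 (last p x)) by (rewrite Hlst; intros C; exact (D12 v1 C1v1 C)).
        destruct (key p x Hc Hh C2x x Nl) as [z [Iz Wz]].
        assert (z = x) by (apply HA; auto; right; apply HW; auto). subst z. auto.
      + assert (b = x).
        { apply HA. rewrite <- Hlst. apply last_In'; auto. right. auto. }
        rewrite H0 in Bb. apply NWx. apply HW. auto. }
    assert (Nd : NoDup (map (hd x) P)).
    { apply (NoDup_nth _ (hd x [])). rewrite length_map. intros i j Hi Hj E.
      rewrite !map_nth in E.
      destruct (Nat.eq_dec i j) as [|n]; auto. exfalso.
      rewrite HlP in Hi, Hj.
      assert (Ii : In (nth i P []) P) by (apply nth_In; lia).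
      assert (Ij : In (nth j P []) P) by (apply nth_In; lia).
      destruct (HPab _ Ii) as [[Hne1 _] _]. destruct (HPab _ Ij) as [[Hne2 _] _].
      apply (Hd i j Hi Hj n (hd x (nth i P []))).
      + apply hd_In; auto.
      + rewrite E. apply hd_In; auto. }
    assert (Inc : incl (map (hd x) P) Wl).
    { intros z Hz. apply in_map_iff in Hz. destruct Hz as [p [<- Ip]]. auto. }
    pose proof (NoDup_incl_length Nd Inc) as Hlen.
    rewrite length_map, HlP in Hlen. simpl in Hlen. lia.
  - destruct HT as [p [[[Hne [Hnd Hc]] [Hh Hlst]] [p1 [p2 [a [b [E _]]]]]]].
    destruct p as [|s0 q]; [congruence|]. simpl in Hh. inversion Hh; subst s0.
    destruct q as [|y q].
    + destruct p1 as [|c [|d p1]]; simpl in E; inversion E.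
    + inversion Hnd; subst. apply H2.
      change (last (s :: y :: q) s) with (last (y :: q) s) in Hlst.
      rewrite <- Hlst at 1. apply last_In'. discriminate.
Qed.
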